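(* Let $\eta\in\{0,1\}$ and $\alpha\in\{-1,1\}$. Let $\vec G$ be a digraph without loops or multiple arcs, with vertex set $\{v_1,\dots,v_n\}$ and $m$ arcs, and define $$g(\vec G;x)=d_2\big(xI_n-\eta D(\vec G)-\alpha A(\vec G)\big).$$ Then $$(m-n)\,g(\vec G;x)+x\,g'(\vec G;x)=\sum_{\vec e\in E(\vec G)} g(\vec G-\vec e;x),$$ where $g'$ is the derivative with respect to $x$ and $\vec G-\vec e$ is $\vec G$ with the arc $\vec e$ deleted (so $g(\vec G-\vec e;x)=d_2(xI_n-\eta D(\vec G-\vec e)-\alpha A(\vec G-\vec e))$).
   Context: For a digraph $\vec H$ on vertices $v_1,\dots,v_n$, $A(\vec H)=(a_{ij})$ is the adjacency matrix with $a_{ij}=1$ if $(v_i,v_j)$ is an arc and $0$ otherwise, and $D(\vec H)=\mathrm{diag}(d^-(v_1),\dots,d^-(v_n))$ is the diagonal matrix of in-degrees. For an $n\times n$ matrix $M=(m_{ij})$ ($n\ge 2$), the second immanant is $d_2(M)=\sum_{\sigma\in S_n}\chi_2(\sigma)\prod_{s=1}^n m_{s\sigma(s)}$, where $\chi_2$ is the irreducible character of $S_n$ corresponding to the partition $(2,1^{n-2})$. *)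

(* Defs.v *)
From HB Require Import structures.
From mathcomp Require Import all_boot all_order all_algebra fingroup perm.
Set Implicit Arguments. Unset Strict Implicit. Unset Printing Implicit Defensive.
Import Order.TTheory GRing.Theory Num.Theory.
Local Open Scope ring_scope.

(* A digraph on vertices 'I_n (v_{i+1} <-> i) is given by its arc set
   E : {set 'I_n * 'I_n}; (i, j) \in E means the arc (v_i, v_j).
   A set has no multiple arcs; looplessness is the predicate below. *)
Definition loopless n (E : {set 'I_n * 'I_n}) : Prop :=
  forall e, e \in E -> e.1 != e.2.

Definition adjmx (R : pzRingType) n (E : {set 'I_n * 'I_n}) : 'M[R]_n :=
  \matrix_(i, j) (((i, j) \in E)%:R).

Definition indeg n (E : {set 'I_n * 'I_n}) (j : 'I_n) : nat :=
  #|[set k | (k, j) \in E]|.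

Definition indegmx (R : pzRingType) n (E : {set 'I_n * 'I_n}) : 'M[R]_n :=
  \matrix_(i, j) ((i == j)%:R * (indeg E j)%:R).

(* chi_2 : irreducible character of S_n for the partition (2,1^{n-2}),
   i.e. sign tensor the standard character: chi_2(s) = sgn(s) (fix(s) - 1). *)
Definition chi2 n (s : 'S_n) : int :=
  (-1) ^+ s * ((#|[set i | s i == i]|)%:Z - 1).

Definition d2 (R : comPzRingType) n (M : 'M[R]_n) : R :=
  \sum_(s : 'S_n) (chi2 s)%:~R * \prod_(i < n) M i (s i).

Definition gpoly (R : comNzRingType) n (eta alpha : R) (E : {set 'I_n * 'I_n})
  : {poly R} :=
  d2 ('X%:M - eta%:P *: indegmx _ E - alpha%:P *: adjmx _ E).

(* Main.v *)
Require Import Defs.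
From HB Require Import structures.
From mathcomp Require Import all_boot all_order all_algebra fingroup perm.
From mathcomp Require Import ring.
Import Order.TTheory GRing.Theory Num.Theory.
Set Implicit Arguments. Unset Strict Implicit. Unset Printing Implicit Defensive.
Local Open Scope ring_scope.

Definition Mx (R : comNzRingType) n (eta alpha : R) (E : {set 'I_n * 'I_n})
  : 'M[{poly R}]_n :=
  'X%:M - eta%:P *: indegmx _ E - alpha%:P *: adjmx _ E.

Lemma Mentry (R : comNzRingType) n (eta alpha : R) (E : {set 'I_n * 'I_n}) i j :
  Mx eta alpha E i j = (i == j)%:R * ('X - eta%:P * (indeg E j)%:R)
     - alpha%:P * ((i, j) \in E)%:R.
Proof.
rewrite /Mx !mxE; case: eqP => _ /=; rewrite ?mulr1n ?mulr0n ?mul1r ?mul0r; ring.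
Qed.

Lemma Mderiv (R : comNzRingType) n (eta alpha : R) (E : {set 'I_n * 'I_n}) i j :
  (Mx eta alpha E i j)^`() = (i == j)%:R.
Proof.
rewrite Mentry !derivE !mul0rn; ring.
Qed.

Lemma sum_col (R : comNzRingType) n (E : {set 'I_n * 'I_n}) j :
  \sum_(e in E | e.2 == j) (1 : {poly R}) = (indeg E j)%:R.
Proof.
transitivity (\sum_(e in [set e in E | e.2 == j]) (1:{poly R})).
  by apply: eq_bigl => e; rewrite inE.
rewrite sumr_const.
have -> : [set e in E | e.2 == j] = (fun k => (k, j)) @: [set k | (k,j) \in E].
  apply/setP => -[a b]; rewrite inE /=; apply/idP/idP.
    by case/andP=> abE /eqP eb; rewrite eb; apply/imsetP; exists a; rewrite ?inE -?eb.
  by case/imsetP=> k; rewrite inE => kE [-> ->]; rewrite kE eqxx.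
by rewrite card_imset // => x y [].
Qed.

Lemma indegD1 n (E : {set 'I_n * 'I_n}) e j :
  e \in E -> e.2 = j -> indeg E j = (indeg (E :\ e) j).+1.
Proof.
case: e => a b eE /= ej; subst b.
rewrite /indeg (cardsD1 a) [in X in (X + _)%N]inE eE add1n; congr (_.+1).
by apply: eq_card => k; rewrite !inE xpair_eqE eqxx andbT.
Qed.

Lemma indeg_other n (E : {set 'I_n * 'I_n}) e j :
  e.2 != j -> indeg (E :\ e) j = indeg E j.
Proof.
move=> ej; apply: eq_card => k; rewrite !inE.
case: e ej => a b /= ej; rewrite xpair_eqE (eq_sym j b) (negbTE ej) andbF //.
Qed.

Lemma Mx_other (R : comNzRingType) n (eta alpha : R) (E : {set 'I_n * 'I_n}) e i j :
  e.2 != j -> Mx eta alpha (E :\ e) i j = Mx eta alpha E i j.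
Proof.
move=> ej; rewrite !Mentry indeg_other // in_setD1.
case: e ej => a b /= ej; rewrite xpair_eqE (eq_sym j b) (negbTE ej) andbF //.
Qed.

Lemma col_sum (R : comNzRingType) n (eta alpha : R) (E : {set 'I_n * 'I_n}) i j :
  \sum_(e in E | e.2 == j) Mx eta alpha (E :\ e) i j =
  ((indeg E j)%:R - 1) * Mx eta alpha E i j + 'X * (Mx eta alpha E i j)^`().
Proof.
rewrite Mderiv.
have H e : e \in E -> e.2 == j -> Mx eta alpha (E :\ e) i j =
   (i == j)%:R * ('X - eta%:P * ((indeg E j)%:R - 1))
   - alpha%:P * (((i, j) != e) && ((i, j) \in E))%:R.
  move=> eE /eqP ej; rewrite Mentry in_setD1 [in RHS](indegD1 eE ej) -addn1 natrD.
  ring.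
under eq_bigr => e /andP[eE ej] do rewrite (H e eE ej).
rewrite big_split /= sumrN.
have S1 : \sum_(e in E | e.2 == j) ((i == j)%:R * ('X - eta%:P * ((indeg E j)%:R - 1)))
   = ((i == j)%:R * ('X - eta%:P * ((indeg E j)%:R - 1))) * (indeg E j)%:R :> {poly R}.
  by rewrite -sum_col mulr_sumr; apply: eq_bigr => *; rewrite mulr1.
have S2 : \sum_(e in E | e.2 == j) alpha%:P * (((i, j) != e) && ((i, j) \in E))%:R
   = alpha%:P * (((i,j) \in E)%:R * ((indeg E j)%:R - 1)) :> {poly R}.
  rewrite -mulr_sumr; congr (_ * _).
  case ijE: ((i,j) \in E); last by rewrite mul0r big1 // => e _; rewrite andbF.
  rewrite mul1r (bigD1 (i,j)) /=; last by rewrite ijE eqxx.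
  rewrite eqxx /= add0r -sum_col [X in _ = X - 1](bigD1 (i,j)) /=; last by rewrite ijE eqxx.
  rewrite addrC addrK; apply: eq_bigr => e /andP[_ ne].
  by rewrite eq_sym ne.
rewrite S1 S2 Mentry; ring.
Qed.

Lemma deriv_prod (R : comNzRingType) (I : eqType) (r : seq I) (f : I -> {poly R}) :
  uniq r -> (\prod_(i <- r) f i)^`() =
            \sum_(k <- r) (f k)^`() * \prod_(i <- r | i != k) f i.
Proof.
elim: r => [|a r IH] /=; first by rewrite !big_nil -polyC1 derivC.
case/andP=> ar ur; rewrite !big_cons derivM IH // eqxx /=.
rewrite -[\prod_(i <- r | i != a) f i]big_filter -rem_filter // rem_id //.
congr (_ + _); rewrite mulr_sumr !big_seq; apply: eq_bigr => k kr.
have ak : a != k by apply: contraNneq ar => ->.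
by rewrite big_cons ak mulrCA.
Qed.

Definition Pp (R : comNzRingType) n (eta alpha : R) (E : {set 'I_n * 'I_n}) (s : 'S_n) :=
  \prod_(i < n) Mx eta alpha E i (s i).

Lemma per_s (R : comNzRingType) n (eta alpha : R) (E : {set 'I_n * 'I_n}) (s : 'S_n) :
  ((#|E|)%:R - n%:R) * Pp eta alpha E s + 'X * (Pp eta alpha E s)^`()
  = \sum_(e in E) Pp eta alpha (E :\ e) s.
Proof.
pose r := fun e : 'I_n * 'I_n => (s^-1)%g e.2.
have rE k e : (r e == k) = (e.2 == s k).
  by rewrite /r; apply/eqP/eqP => [<-|->]; rewrite ?permKV ?permK.
have R1 e : e \in E -> Pp eta alpha (E :\ e) s =
   Mx eta alpha (E :\ e) (r e) e.2 * \prod_(i < n | i != r e) Mx eta alpha E i (s i).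
  move=> _; rewrite /Pp (bigD1 (r e)) //= /r permKV; congr (_ * _).
  apply: eq_bigr => i ne; apply: Mx_other.
  by move: ne; rewrite -/(r e) eq_sym rE.
have RHS : \sum_(e in E) Pp eta alpha (E :\ e) s = \sum_(k < n)
   (((indeg E (s k))%:R - 1) * Mx eta alpha E k (s k) + 'X * (Mx eta alpha E k (s k))^`())
   * \prod_(i < n | i != k) Mx eta alpha E i (s i).
  rewrite (eq_bigr _ R1) (partition_big r xpredT) //=; apply: eq_bigr => k _.
  rewrite -col_sum mulr_suml; apply: eq_big => [e|e /andP[_ /eqP <-]].
    by rewrite rE.
  by rewrite /r permKV.
have cE : (#|E|)%:R = \sum_(k < n) (indeg E (s k))%:R :> {poly R}.
  transitivity (\sum_(e in E) (1 : {poly R})); first by rewrite sumr_const.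
  rewrite (partition_big r xpredT) //=; apply: eq_bigr => k _.
  by rewrite -sum_col; apply: eq_bigl => e; rewrite rE.
have cn : n%:R = \sum_(k < n) (1 : {poly R}) by rewrite sumr_const card_ord.
rewrite RHS cE cn -sumrB mulr_suml /Pp deriv_prod ?index_enum_uniq //.
rewrite mulr_sumr -big_split /=; apply: eq_bigr => k _.
rewrite (bigD1 k) //=; ring.
Qed.

Theorem lemma3p5 (R : comNzRingType) (n : nat) (eta alpha : R)
  (E : {set 'I_n * 'I_n}) :
  (2 <= n)%N ->
  (eta = 0 \/ eta = 1) -> (alpha = -1 \/ alpha = 1) ->
  loopless E ->
  ((#|E|)%:R - n%:R) * gpoly eta alpha E + 'X * (gpoly eta alpha E)^`()
  = \sum_(e in E) gpoly eta alpha (E :\ e).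
Proof.
move=> _ _ _ _.
have G F : gpoly eta alpha F = \sum_(s : 'S_n) (chi2 s)%:~R * Pp eta alpha F s by [].
under eq_bigr => e _ do rewrite G.
rewrite G exchange_big /= raddf_sum !mulr_sumr -big_split /=.
apply: eq_bigr => s _.
rewrite derivM derivMz -polyC1 derivC mul0rz mul0r add0r polyC1 -mulr_sumr -per_s.
ring.
Qed.
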